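(* Let $\Gamma$ be an elliptic graph with NN-elliptic sequence $\{B_j\}_{j=-1}^m$ and cycles $C_j$, and let $-1\le j\le m-1$. If $v\in\mathcal V(\Gamma)\setminus\mathcal V(B_{j+1})$ satisfies $(E_{B_{j+1}},E_v)=1$, where $E_{B_{j+1}}=\sum_{w\in\mathcal V(B_{j+1})}E_w$, then $(C_j,E_v)=e_v+1$.
   Context: Let $\Gamma$ be a finite connected tree with vertex set $\mathcal V$, each vertex $v$ decorated by an integer $e_v$ (genera zero). $L=\mathbb Z\langle E_v\rangle$ with form $(E_v,E_v)=e_v$, $(E_v,E_w)=1$ for adjacent $v\ne w$, $0$ otherwise, assumed negative definite; $L'$ the dual lattice, $[l']$ the class in $L'/L$; $\ge$ coordinatewise, $l>0$ if $l\ge0,l\ne0$; $|l'|$ the support. $Z_K$ with $(Z_K,E_v)=e_v+2$; $\chi(l')=-(l',l'-Z_K)/2$. $\mathcal S'=\{l':(l',E_v)\le0\ \forall v\}$, $s_h=\min\{l'\in\mathcal S':[l']=h\}$; $Z_{min}(B)$ the minimal nonzero element of $\mathcal S'(B)\cap L(B)$ for a connected full subgraph $B$. Elliptic graph: $e_v\le-2$ for all $v$, $\min_{l\in L,l>0}\chi(l)=0$. NN-elliptic sequence: $B_{-1}=\Gamma$, $Z_{B_{-1}}=s_{[Z_K]}$, $B_0=|Z_K-s_{[Z_K]}|$; for $j\ge0$, $Z_{B_j}=Z_{min}(B_j)$, and if $Z_K-\sum_{i=-1}^jZ_{B_i}\ne0$ then $B_{j+1}=|Z_K-\sum_{i=-1}^jZ_{B_i}|$;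 $m$ is the index with $Z_K=\sum_{i=-1}^mZ_{B_i}$; $C_j=\sum_{i=-1}^jZ_{B_i}$. *)

(* Defs.v *)
From mathcomp Require Import all_boot all_order all_algebra.
Set Implicit Arguments. Unset Strict Implicit. Unset Printing Implicit Defensive.
Import Order.TTheory GRing.Theory Num.Theory.
Local Open Scope ring_scope.

(* Elements of L' ⊗ Q are written in the basis {E_v}: vectors 'I_n -> rat. *)
Definition vec (n : nat) := 'I_n -> rat.

Definition is_intq (x : rat) : Prop := exists z : int, x = z%:~R.
Definition in_L n (l : vec n) : Prop := forall v, is_intq (l v).

Definition vadd n (x y : vec n) : vec n := fun v => x v + y v.
Definition vsub n (x y : vec n) : vec n := fun v => x v - y v.
Definition vzero n : vec n := fun _ => 0.
Definition vsum n (k : nat) (Z : nat -> vec n) : vec n :=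
  fun v => \sum_(i < k) Z i v.
Definition E n (v : 'I_n) : vec n := fun w => (w == v)%:R.
Definition EB n (B : {set 'I_n}) : vec n := fun w => (w \in B)%:R.

Definition Ment n (adj : rel 'I_n) (e : 'I_n -> int) (v w : 'I_n) : rat :=
  if v == w then (e v)%:~R else if adj v w then 1 else 0.
Definition iform n (adj : rel 'I_n) (e : 'I_n -> int) (x y : vec n) : rat :=
  \sum_(v < n) \sum_(w < n) x v * y w * Ment adj e v w.

Definition vle n (x y : vec n) : Prop := forall v, x v <= y v.
Definition supp n (x : vec n) : {set 'I_n} := [set v | x v != 0].

Definition is_tree n (adj : rel 'I_n) : Prop :=
  (0 < n)%N /\ symmetric adj /\ irreflexive adj /\
  (forall u v, connect adj u v) /\
  #|[set p : 'I_n * 'I_n | adj p.1 p.2]| = (2 * n.-1)%N.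

Definition neg_def n (adj : rel 'I_n) (e : 'I_n -> int) : Prop :=
  forall l : vec n, in_L l -> l <> (@vzero n) -> iform adj e l l < 0.

Definition in_Ldual n (adj : rel 'I_n) (e : 'I_n -> int) (l : vec n) : Prop :=
  forall v, is_intq (iform adj e l (E v)).
Definition in_Sdual n (adj : rel 'I_n) (e : 'I_n -> int) (l : vec n) : Prop :=
  in_Ldual adj e l /\ forall v, iform adj e l (E v) <= 0.
Definition same_class n (x y : vec n) : Prop := in_L (vsub x y).

Definition IsMin n (P : vec n -> Prop) (x : vec n) : Prop :=
  P x /\ forall y, P y -> vle x y.

Definition is_s n (adj : rel 'I_n) (e : 'I_n -> int) (l' s : vec n) : Prop :=
  IsMin (fun x => in_Sdual adj e x /\ same_class x l') s.

Definition is_Zmin n (adj : rel 'I_n) (e : 'I_n -> int) (B : {set 'I_n}) (z : vec n) : Prop :=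
  IsMin (fun l => [/\ in_L l, l <> (@vzero n), supp l \subset B &
                     forall v, v \in B -> iform adj e l (E v) <= 0]) z.

Definition is_ZK n (adj : rel 'I_n) (e : 'I_n -> int) (ZK : vec n) : Prop :=
  forall v, iform adj e ZK (E v) = (e v + 2)%:~R.

Definition chi n (adj : rel 'I_n) (e : 'I_n -> int) (ZK l : vec n) : rat := - iform adj e l (vsub l ZK) / 2.

Definition elliptic n (adj : rel 'I_n) (e : 'I_n -> int) (ZK : vec n) : Prop :=
  (forall v, e v <= -2) /\
  (exists l : vec n, [/\ in_L l, vle ((@vzero n)) l, l <> (@vzero n) & chi adj e ZK l = 0]) /\
  (forall l : vec n, in_L l -> vle ((@vzero n)) l -> l <> (@vzero n) -> 0 <= chi adj e ZK l).

(* NN-elliptic sequence with shifted indices: B k = B_{k-1}, Z k = Z_{B_{k-1}},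
   k = 0..M where M = m+1.  C_{k-1} = vsum (k) Z. *)
Definition NN_seq n (adj : rel 'I_n) (e : 'I_n -> int) (ZK : vec n) (M : nat) (B : nat -> {set 'I_n})
    (Z : nat -> vec n) : Prop :=
  [/\ B 0%N = setT,
      is_s adj e ZK (Z 0%N),
      (forall k, (1 <= k <= M)%N -> is_Zmin adj e (B k) (Z k)),
      (forall k, (k < M)%N -> vsum k.+1 Z <> ZK /\ B k.+1 = supp (vsub ZK (vsum k.+1 Z)))
    & vsum M.+1 Z = ZK].

(* Main.v *)
Require Import Defs.
From mathcomp Require Import all_boot all_order all_algebra.
From mathcomp Require Import ring lra zify.
From Stdlib Require Import FunctionalExtensionality Classical.
Import Order.TTheory GRing.Theory Num.Theory.
Local Open Scope ring_scope.

Lemma isintP (x : rat) : is_intq x <-> x \is a Num.int.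
Proof. by split => [[z ->]|/intrP [z ->]]; [apply: intr_int| exists z]. Qed.

Section S.
Variables (n : nat) (adj : rel 'I_n) (e : 'I_n -> int).
Hypothesis adjC : symmetric adj.
Local Notation M := (Ment adj e).
Local Notation "( x , y )" := (iform adj e x y).

Lemma MentC u w : M u w = M w u.
Proof. by rewrite /Ment eq_sym adjC; case: eqP => // ->. Qed.

Lemma iformC x y : (x, y) = (y, x).
Proof.
rewrite /iform exchange_big; apply eq_bigr => u _; apply eq_bigr => w _.
by rewrite MentC; ring.
Qed.

Lemma iform_lin a b x y z :
  iform adj e (fun v => a * x v + b * y v) z = a * (x, z) + b * (y, z).
Proof.
rewrite /iform !mulr_sumr -big_split; apply eq_bigr => u _.
rewrite !mulr_sumr -big_split; apply eq_bigr => w _ /=; ring.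
Qed.

Lemma iformDl x y z : (vadd x y, z) = (x, z) + (y, z).
Proof.
have -> : (x,z) + (y,z) = 1 * (x,z) + 1 * (y,z) by ring.
by rewrite -iform_lin; congr iform; apply: functional_extensionality => v; rewrite /vadd !mul1r.
Qed.
Lemma iformBl x y z : (vsub x y, z) = (x, z) - (y, z).
Proof.
have -> : (x,z) - (y,z) = 1 * (x,z) + (-1) * (y,z) by ring.
by rewrite -iform_lin; congr iform; apply: functional_extensionality => v; rewrite /vsub; ring.
Qed.
Lemma iformDr x y z : (z, vadd x y) = (z, x) + (z, y).
Proof. by rewrite iformC iformDl !(iformC z). Qed.
Lemma iformBr x y z : (z, vsub x y) = (z, x) - (z, y).
Proof. by rewrite iformC iformBl !(iformC z). Qed.
Lemma iform0l z : (@vzero n, z) = 0.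
Proof. by rewrite /iform big1 // => u _; rewrite big1 // => w _; rewrite /vzero !mul0r. Qed.

Lemma sum_ind (F : 'I_n -> rat) v : \sum_u (u == v)%:R * F u = F v.
Proof.
rewrite (bigD1 v) //= eqxx mul1r big1 ?addr0 // => u /negbTE ->; by rewrite mul0r.
Qed.

Lemma iform_Er x w : (x, E w) = \sum_v x v * M v w.
Proof.
rewrite /iform; apply eq_bigr => u _.
under eq_bigr => i _ do rewrite /E (mulrC (x u)) -!mulrA.
by rewrite sum_ind.
Qed.

Lemma iform_dec x y : (x, y) = \sum_w y w * (x, E w).
Proof.
under [RHS]eq_bigr => w _ do rewrite iform_Er.
rewrite /iform exchange_big; apply eq_bigr => w _.
by rewrite mulr_sumr; apply eq_bigr => u _; ring.
Qed.


Lemma int_Ment u w : M u w \is a Num.int.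
Proof. rewrite /Ment; case: eqP => _; first exact: intr_int. by case: adj; [exact: int_num1|exact: int_num0]. Qed.

Lemma iformE_int x w : in_L x -> (x, E w) \is a Num.int.
Proof.
move=> Lx; rewrite iform_Er; apply: rpred_sum => u _; apply: rpredM; last exact: int_Ment.
by apply/isintP.
Qed.

Lemma iform_le0 x y (B : {set 'I_n}) : (forall w, 0 <= y w) -> (forall w, y w != 0 -> w \in B) ->
  (forall w, w \in B -> (x, E w) <= 0) -> (x, y) <= 0.
Proof.
move=> y0 yB xB; rewrite iform_dec -oppr_ge0 -sumrN; apply: sumr_ge0 => w _.
rewrite oppr_ge0; have [->|yw] := eqVneq (y w) 0; first by rewrite mul0r.
by apply: mulr_ge0_le0 => //; apply: xB; apply: yB.
Qed.

Lemma Ment_ge0 u w : u != w -> 0 <= M u w.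
Proof. by rewrite /Ment => /negbTE ->; case: adj. Qed.

Lemma iform_cross_ge0 p q : (forall u, 0 <= p u) -> (forall u, 0 <= q u) ->
  (forall u, p u * q u = 0) -> 0 <= (p, q).
Proof.
move=> p0 q0 pq; apply: sumr_ge0 => u _; apply: sumr_ge0 => w _.
have [<-|uw] := eqVneq u w; first by rewrite pq mul0r.
by rewrite mulr_ge0 ?Ment_ge0 // mulr_ge0.
Qed.

Variable ZK : vec n.
Local Notation chi := (chi adj e ZK).

Lemma chi_add x y : chi (vadd x y) = chi x + chi y - (x, y).
Proof.
rewrite /Defs.chi iformDl !iformBr !iformDr (iformC y x); lra.
Qed.

Lemma chi_sym x : chi (vsub ZK x) = chi x.
Proof.
rewrite /Defs.chi !iformBl !iformBr (iformC ZK x); lra.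
Qed.

Lemma chi0 : chi (@vzero n) = 0.
Proof. by rewrite /Defs.chi iform0l oppr0 mul0r. Qed.

Lemma chi_E v : is_ZK adj e ZK -> chi (E v) = 1.
Proof.
move=> hZ; rewrite /Defs.chi iformBr (iformC (E v) ZK) hZ iform_Er.
under eq_bigr => u _ do rewrite /E.
rewrite sum_ind /Ment eqxx rmorphD /=; lra.
Qed.


Lemma int_ge1 (x : rat) : x \is a Num.int -> 0 < x -> 1 <= x.
Proof. by move=> xi x0; have := norm_intr_ge1 xi (lt0r_neq0 x0); rewrite gtr0_norm. Qed.

Lemma Zmin_ge0 z (B : {set 'I_n}) : neg_def adj e -> in_L z -> (forall u, z u != 0 -> u \in B) ->
  (forall u, u \in B -> (z, E u) <= 0) -> forall u, 0 <= z u.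
Proof.
move=> nd Lz zB za.
pose N : vec n := fun u => if z u < 0 then - z u else 0.
pose P : vec n := fun u => if z u < 0 then 0 else z u.
have N0 u : 0 <= N u by rewrite /N; case: ifP => // h; rewrite oppr_ge0 ltW.
have P0 u : 0 <= P u by rewrite /P; case: ifP => // /negbT; rewrite -leNgt.
have zPN : z = vsub P N.
  by apply: functional_extensionality => u; rewrite /vsub /P /N; case: ifP => _; ring.
have h1 : (z, N) <= 0.
  apply: (@iform_le0 z N B) => // w Nw; apply: zB; move: Nw; rewrite /N; case: ifP => //.
  by move=> h _; rewrite lt_eqF.
have h2 : 0 <= (P, N).
  apply: iform_cross_ge0 => // u; rewrite /P /N; case: ifP => _; by rewrite ?mul0r ?mulr0.
have h3 : 0 <= (N, N) by move: h1; rewrite {1}zPN iformBl; lra.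
have LN : in_L N.
  move=> u; apply/isintP; rewrite /N; case: ifP => _; last exact: int_num0.
  by rewrite rpredN; apply/isintP.
case: (classic (N = @vzero n)) => [HN|HN]; last by have := nd _ LN HN; lra.
move=> u; rewrite leNgt; apply/negP => zu.
have := congr1 (fun f => f u) HN; rewrite /N /vzero zu /= => /eqP; rewrite oppr_eq0 => /eqP zu0.
by move: zu; rewrite zu0 ltxx.
Qed.

Lemma chi_ge0 l : elliptic adj e ZK -> in_L l -> vle (@vzero n) l -> 0 <= chi l.
Proof.
move=> [_ [_ he]] Ll l0; case: (classic (l = @vzero n)) => [->|hl]; first by rewrite chi0.
exact: he.
Qed.

Section Laufer.
Variable s : vec n.
Hypotheses (hs : is_s adj e ZK s) (hZK : is_ZK adj e ZK).

Lemma ZK_int v : (ZK, E v) \is a Num.int.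
Proof. by rewrite hZK; exact: intr_int. Qed.

Lemma laufer N : forall y, \sum_u (s u - y u) < N%:R -> vle y s -> in_L (vsub y ZK) -> chi s <= chi y.
Proof.
elim: N => [|N IH] y hsum hys hL.
  have : 0 <= \sum_u (s u - y u) by apply: sumr_ge0 => u _; rewrite subr_ge0.
  by move: hsum; rewrite ltNge => /negP.
have Lsy : in_L (vsub s y).
  case: hs => [[_ hcl] _] u; apply/isintP.
  have -> : vsub s y u = vsub s ZK u - vsub y ZK u by rewrite /vsub; ring.
  by apply: rpredB; apply/isintP.
have yint v : (y, E v) \is a Num.int.
  have -> : y = vadd (vsub y ZK) ZK by apply: functional_extensionality => u; rewrite /vadd /vsub; ring.
  by rewrite iformDl; apply: rpredD; [exact: iformE_int|exact: ZK_int].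
case: (classic (forall v, (y, E v) <= 0)) => [hy|].
  have : vle s y.
    case: hs => _; apply; split => //; split => // v; apply/isintP; exact: yint.
  move=> hsy; have -> // : y = s.
  by apply: functional_extensionality => u; apply/eqP; rewrite eq_le hys hsy.
move/not_all_ex_not => [v] /negP; rewrite -ltNge => yv.
have yv1 : 1 <= (y, E v) by apply: int_ge1.
have ltv : y v < s v.
  rewrite lt_neqAle hys andbT; apply/negP => /eqP yvsv.
  have : 0 <= (vsub s y, E v).
    rewrite iform_Er; apply: sumr_ge0 => u _.
    have [->|uv] := eqVneq u v; first by rewrite /vsub yvsv subrr mul0r.
    by rewrite mulr_ge0 ?Ment_ge0 // /vsub subr_ge0.
  rewrite iformBl; case: hs => [[[_ hS] _] _]; have := hS v; lra.
have sv1 : 1 <= s v - y v by apply: int_ge1; [apply/isintP; exact: Lsy| rewrite subr_gt0].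
have := IH (vadd y (E v)).
have hEs : \sum_u E v u = 1.
  by rewrite -[RHS](sum_ind (fun _ => 1) v); apply: eq_bigr => u _; rewrite mulr1.
have hsum' : \sum_u (s u - vadd y (E v) u) = \sum_u (s u - y u) - 1.
  by rewrite -hEs -sumrB; apply: eq_bigr => u _; rewrite /vadd; ring.
rewrite hsum' chi_add chi_E // => H; have : chi s <= chi y + 1 - (y, E v).
  apply: H.
  - by move: hsum; rewrite -addn1 natrD; lra.
  - move=> u; rewrite /vadd /E; have [->|uv] := eqVneq u v; first by rewrite /= ; lra.
    by rewrite /= addr0.
  - move=> u; apply/isintP.
    have -> : vsub (vadd y (E v)) ZK u = vsub y ZK u + E v u by rewrite /vsub /vadd; ring.
    apply: rpredD; first by apply/isintP.
    by rewrite /E; case: (u == v); [exact: int_num1|exact: int_num0].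
lra.
Qed.


Lemma s_le0 : elliptic adj e ZK -> chi s <= 0.
Proof.
move=> hell; have hell' := hell; case: hell' => [_ [[l0 [Ll0 l00 l0n chil0]] _]].
have Lsk : in_L (vsub s ZK) by case: hs => [[_ hcl] _].
pose a := vsub ZK l0.
pose m : vec n := fun u => Num.min (s u) (a u).
pose Mx : vec n := fun u => Num.max (s u) (a u).
have hms : vle m s by move=> u; rewrite /m ge_min lexx.
have hLm : in_L (vsub m ZK).
  move=> u; apply/isintP; rewrite /vsub /m minElt; case: ifP => _; first by apply/isintP; exact: Lsk.
  by rewrite /a /vsub (_ : ZK u - l0 u - ZK u = - l0 u) ?rpredN; [apply/isintP; exact: Ll0 | ring].
have h1 : chi s <= chi m.
  have hx : 0 <= \sum_u (s u - m u) by apply: sumr_ge0 => u _; rewrite subr_ge0.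
  exact: (laufer _ _ (archi_boundP hx) hms hLm).
pose p := vsub s m. pose q := vsub a m.
have p0 u : 0 <= p u by rewrite /p /vsub subr_ge0.
have q0 u : 0 <= q u by rewrite /q /vsub subr_ge0 /m ge_min lexx orbT.
have pq u : p u * q u = 0.
  rewrite /p /q /vsub /m minElt; case: ifP => _; first by rewrite subrr mul0r.
  by rewrite subrr mulr0.
have eMx : Mx = vadd (vadd m p) q.
  apply: functional_extensionality => u; rewrite /vadd /p /q /vsub /Mx /m minElt maxElt.
  case: ifP => _; ring.
have es : s = vadd m p by apply: functional_extensionality => u; rewrite /vadd /p /vsub; ring.
have ea : a = vadd m q by apply: functional_extensionality => u; rewrite /vadd /q /vsub; ring.
have h2 : chi s <= chi Mx.
  have eM : Mx = vadd s (vsub Mx s) by apply: functional_extensionality => u; rewrite /vadd /vsub; ring.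
  rewrite eM chi_add.
  have c0 : 0 <= chi (vsub Mx s).
    apply: chi_ge0 => //.
    - move=> u; apply/isintP; rewrite /vsub /Mx maxElt; case: ifP => _; last by rewrite subrr int_num0.
      have -> : a u - s u = - l0 u - (s u - ZK u) by rewrite /a /vsub; ring.
      by apply: rpredB; [rewrite rpredN; apply/isintP; exact: Ll0 | apply/isintP; exact: Lsk].
    - by move=> u; rewrite /vzero /vsub subr_ge0 /Mx le_max lexx.
  have c1 : (s, vsub Mx s) <= 0.
    apply: (@iform_le0 s (vsub Mx s) setT) => //.
    - by move=> u; rewrite /vsub subr_ge0 /Mx le_max lexx.
    - by move=> w _; case: hs => [[[_ hS] _] _].
  lra.
have h3 : chi Mx + chi m <= chi s + chi a.
  rewrite eMx es ea !chi_add iformDl.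
  have := @iform_cross_ge0 p q p0 q0 pq. lra.
have ha : chi a = 0 by rewrite /a chi_sym.
lra.
Qed.

End Laufer.


Lemma main_sec M B Z k v : neg_def adj e -> is_ZK adj e ZK -> elliptic adj e ZK ->
  NN_seq adj e ZK M B Z -> (k < M)%N -> v \notin B k.+1 ->
  (EB (B k.+1), E v) = 1 -> (vsum k.+1 Z, E v) = (e v + 1)%:~R.
Proof.
move=> nd hZK hell [B0 hs hZ hstep hend] kM vB hEB.
pose T j : vec n := vsub ZK (vsum j Z).
have vsumS j u : vsum j.+1 Z u = vsum j Z u + Z j u by rewrite /vsum big_ord_recr.
have Zprop i : (1 <= i <= M)%N -> [/\ in_L (Z i), forall u, 0 <= Z i u,
    (forall u, Z i u != 0 -> u \in B i) & forall u, u \in B i -> (Z i, E u) <= 0].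
  move=> hi; have [[LZ _ sZ aZ] _] := hZ i hi.
  have zB : forall u, Z i u != 0 -> u \in B i by move=> u hu; apply: (subsetP sZ); rewrite inE.
  split => //; exact: (@Zmin_ge0 (Z i) (B i) nd LZ zB aZ).
have Tsum j u : (j <= M.+1)%N -> T j u = \sum_(j <= i < M.+1) Z i u.
  move=> hj; rewrite /T /vsub -(congr1 (fun f => f u) hend) /vsum.
  have bm : forall m, \sum_(i < m) Z i u = \sum_(0 <= i < m) Z i u by move=> m; rewrite big_mkord.
  rewrite !bm (@big_cat_nat _ _ _ j 0 M.+1 _ _ (leq0n j) hj) /=; ring.
have TS j u : T j.+1 u = T j u - Z j u by rewrite /T /vsub vsumS; ring.
have T0 j u : (1 <= j <= M.+1)%N -> 0 <= T j u.
  move=> /andP[h1 h2]; rewrite Tsum // big_nat; apply: sumr_ge0 => i /andP[hi1 hi2].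
  have [_ H _ _] := Zprop i (ltac:(lia)); exact: H.
have TL j : (1 <= j <= M.+1)%N -> in_L (T j).
  elim: j => [//|j IH] /andP[h1 h2] u.
  case: j IH h1 h2 => [|j] IH h1 h2.
    apply/isintP; rewrite /T /vsub vsumS /vsum big_ord0.
    case: hs => [[_ hcl] _].
    rewrite (_ : ZK u - (0 + Z 0%N u) = - (Z 0%N u - ZK u)); last by ring.
    by rewrite rpredN; apply/isintP; exact: hcl.
  apply/isintP; rewrite TS; apply: rpredB; apply/isintP; first by apply: IH; lia.
  by have [H _ _ _] := Zprop j.+1 (ltac:(lia)); exact: H.
have hsupp j : (1 <= j <= M)%N -> B j = supp (T j).
  case: j => [//|j] hj; have [_ ->] := hstep j (ltac:(lia)); done.
have Tchi j : (1 <= j <= M)%N -> chi (T j) <= 0.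
  elim: j => [//|j IH] /andP[h1 h2].
  case: j IH h1 h2 => [|j] IH h1 h2.
    have -> : T 1%N = vsub ZK (Z 0%N).
      by apply: functional_extensionality => u; rewrite /T /vsub vsumS /vsum big_ord0 add0r.
    rewrite chi_sym; exact: (@s_le0 (Z 0%N) hs hZK hell).
  have IH' := IH (ltac:(lia)).
  have eT : T j.+1 = vadd (Z j.+1) (T j.+2).
    by apply: functional_extensionality => u; rewrite /vadd (TS j.+1 u); ring.
  have [LZ Z0 ZB Za] := Zprop j.+1 (ltac:(lia)).
  have c1 : 0 <= chi (Z j.+1) by apply: chi_ge0 => // u; exact: Z0.
  have c2 : (Z j.+1, T j.+2) <= 0.
    apply: (@iform_le0 (Z j.+1) (T j.+2) (B j.+1)) => //.
    - by move=> u; apply: T0; lia.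
    - move=> u hu; rewrite hsupp; last by lia.
      rewrite inE; apply/negP => /eqP h.
      have t0 := T0 j.+2 u (ltac:(lia)); have z0 := Z0 u.
      have e1 := TS j.+1 u; rewrite h in e1.
      have : T j.+2 u == 0 by rewrite eq_le; apply/andP; split; lra.
      by rewrite (negbTE hu).
  have c3 : 0 <= chi (T j.+2) by apply: chi_ge0 => // [|u]; [apply: TL; lia | apply: T0; lia].
  move: IH'; rewrite eT chi_add; lra.
pose X := T k.+1.
have hX0 u : 0 <= X u by apply: T0; lia.
have hXL : in_L X by apply: TL; lia.
have hXchi : chi X <= 0 by apply: Tchi; lia.
have hsX : B k.+1 = supp X by apply: hsupp; lia.
have hup : (X, E v) <= 1.
  have hY : 0 <= chi (vadd X (E v)).
    case: hell => [_ [_ H]]; apply: H.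
    - move=> u; apply/isintP; apply: rpredD; first by apply/isintP; exact: hXL.
      by rewrite /E; case: (u == v); [exact: int_num1|exact: int_num0].
    - move=> u; rewrite /vzero /vadd; apply: addr_ge0 => //; rewrite /E; case: (u == v) => /=; lra.
    - move=> h; have := congr1 (fun f => f v) h; rewrite /vadd /vzero /E eqxx /=.
      have := hX0 v; lra.
  move: hY; rewrite chi_add chi_E //; lra.
have hlo : 1 <= (X, E v).
  rewrite -hEB !iform_Er; apply: ler_sum => u _; rewrite /EB.
  have [->|uv] := eqVneq u v.
    rewrite (negbTE vB) mul0r.
    have : X v == 0 by apply/negPn/negP => h; case/negP: vB; rewrite hsX inE h.
    by move/eqP ->; rewrite mul0r.
  apply: ler_wpM2r; first exact: Ment_ge0.
  case: (boolP (u \in B k.+1)) => hu /=; last exact: hX0.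
  apply: int_ge1; first by apply/isintP; exact: hXL.
  rewrite lt0r hX0 andbT; move: hu; rewrite hsX inE; done.
have hX1 : (X, E v) = 1 by apply/eqP; rewrite eq_le hup hlo.
have -> : vsum k.+1 Z = vsub ZK X.
  by apply: functional_extensionality => u; rewrite /X /T /vsub; ring.
rewrite iformBl hZK hX1 !intrD; lra.
Qed.

End S.

Theorem mainTheorem16 (n : nat) (adj : rel 'I_n) (e : 'I_n -> int) (ZK : vec n)
  (M : nat) (B : nat -> {set 'I_n}) (Z : nat -> vec n) (k : nat) (v : 'I_n) :
  is_tree adj -> neg_def adj e -> is_ZK adj e ZK -> elliptic adj e ZK ->
  NN_seq adj e ZK M B Z ->
  (k < M)%N ->
  v \notin B k.+1 ->
  iform adj e (EB (B k.+1)) (E v) = 1 ->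
  iform adj e (vsum k.+1 Z) (E v) = (e v + 1)%:~R.
Proof.
move=> [_ [adjC _]]; exact: (@main_sec n adj e adjC ZK M B Z k v).
Qed.
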